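(* For every $n\ge1$, the maps $\varphi\colon\mathscr C_n(A)\to\mathscr G_n^{\mathrm{ext}}(A)$ are well defined (i.e. $\varphi(c)$ has no directed cycle of uniform weight) and form a lax morphism of operads: for $c\in\mathscr C_n(A)$, $d\in\mathscr C_n(B)$ and $a\in A$ one has $\varphi(c\circ_a d)\le\varphi(c)\circ_a\varphi(d)$ in $\mathscr G_n^{\mathrm{ext}}(A[B/a])$, and $\varphi$ commutes with relabelling along bijections.
   Context: $\mathscr C_n(A)$ (little $n$-cubes) is the space of families $c=(c_a)_{a\in A}$ of maps $c_a\colon(0,1)^n\to(0,1)^n$, $c_a(x)=u(a)\odot x+v(a)$ with $u(a)\in\mathbb R_{>0}^n$ ($\odot$ = coordinatewise product), whose images are pairwise disjoint; symmetric groups permute the indices and $c\circ_a d$ is obtained by composing the embeddings $d_b$ with $c_a$, i.e. $(c\circ_a d)_{a'}=c_{a'}$ for $a'\neq a$ and $(c\circ_a d)_b=c_a\circ d_b$. Put $w(a)=u(a)+v(a)$. Say $c_a$ is $i$-below $c_b$ if $w(a)_i\le v(b)_i$, and $c_a,c_b$ are $i$-separated if one is $i$-below the other. $\varphi(c)$ is the complete directed graph on $A$ in which the edge between $a\neq b$ has weight the smallest $i$ such that $c_a,c_b$ are $i$-separated, directed $a\to b$ iff $c_a$ is $i$-below $c_b$. Weighted complete directed graphs on $A$: each two-element subset $\{a,b\}$ carries exactly one directed edge with weight in $\{1,\dots,n\}$; order $g\le h$ iff whenever $a\xrightarrow{v}b$ in $g$, either $a\xrightarrow{w}b$ in $h$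 with $v\le w$ or $b\xrightarrow{w}a$ in $h$ with $v<w$. $\mathscr G_n^{\mathrm{ext}}(A)$ is the poset of such graphs with no directed cycle of uniform weight, with composition $g\circ_a h$ on $(A\setminus\{a\})\sqcup B$: edges among $A\setminus\{a\}$ as in $g$, among $B$ as in $h$, and between $a'\in A\setminus\{a\}$ and $b\in B$ as the edge between $a'$ and $a$ in $g$. *)

(* Defs.v *)
From HB Require Import structures.
From mathcomp Require Import all_boot all_order all_algebra.
From mathcomp Require Import reals.
Set Implicit Arguments. Unset Strict Implicit. Unset Printing Implicit Defensive.
Import Order.TTheory GRing.Theory Num.Theory.

Local Open Scope ring_scope.

(* A family c = (c_a)_{a in A} with c_a(x) = u(a) (.) x + v(a),
   coordinates indexed by 'I_n (coordinate i+1 of the paper is i : 'I_n). *)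
Record cube_fam (R : realType) (n : nat) (A : Type) := CubeFam {
  cu : A -> 'I_n -> R ;
  cv : A -> 'I_n -> R }.

Definition in_unit_cube (R : realType) (n : nat) (x : 'I_n -> R) : Prop :=
  forall i, 0 < x i /\ x i < 1.

Definition cemb (R : realType) (n : nat) (A : Type) (c : cube_fam R n A) (a : A)
  (x : 'I_n -> R) : 'I_n -> R := fun i => cu c a i * x i + cv c a i.

Definition is_cubes (R : realType) (n : nat) (A : Type) (c : cube_fam R n A) : Prop :=
  [/\ (forall a i, 0 < cu c a i),
      (forall a x, in_unit_cube x -> in_unit_cube (cemb c a x)) &
      (forall a b, a <> b -> forall x y, in_unit_cube x -> in_unit_cube y ->
          cemb c a x <> cemb c b y)].

Definition cw (R : realType) (n : nat) (A : Type) (c : cube_fam R n A) a i :=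
  cu c a i + cv c a i.
Definition below (R : realType) (n : nat) (A : Type) (c : cube_fam R n A)
  (a b : A) (i : 'I_n) : bool := cw c a i <= cv c b i.
Definition separated (R : realType) (n : nat) (A : Type) (c : cube_fam R n A)
  (a b : A) (i : 'I_n) : bool := below c a b i || below c b a i.

Definition cube_relabel (R : realType) (n : nat) (A A' : Type)
  (c : cube_fam R n A) (sigma : A' -> A) : cube_fam R n A' :=
  CubeFam (fun a' => cu c (sigma a')) (fun a' => cv c (sigma a')).

Notation subst_idx A B a := ({x : A | x != a} + B)%type.

Definition cube_comp (R : realType) (n : nat) (A B : finType) (c : cube_fam R n A)
  (a : A) (d : cube_fam R n B) : cube_fam R n (subst_idx A B a) :=
  CubeFam
    (fun z => match z with
              | inl x => cu c (val x)
              | inr b => fun i => cu c a i * cu d b i end)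
    (fun z => match z with
              | inl x => cv c (val x)
              | inr b => fun i => cu c a i * cv d b i + cv c a i end).

Local Close Scope ring_scope.

(* g a b = w > 0 means there is a directed edge a -> b of weight w;
   g a b = 0 means there is no edge a -> b. *)
Definition wgraph (A : Type) := A -> A -> nat.

Definition is_wcdg (n : nat) (A : finType) (g : wgraph A) : Prop :=
  (forall a, g a a = 0%N) /\
  (forall a b, a != b ->
     ((0 < g a b)%N (+) (0 < g b a))%B /\ (g a b <= n)%N /\ (g b a <= n)%N).

Definition uniform_cycle (A : finType) (g : wgraph A) (w : nat) (s : seq A) : bool :=
  [&& (0 < w)%N, s != [::], uniq s & cycle (fun x y => g x y == w) s].

Definition is_Gext (n : nat) (A : finType) (g : wgraph A) : Prop :=
  is_wcdg n g /\ ~ (exists w s, uniform_cycle g w s).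

Definition graph_le (A : finType) (g h : wgraph A) : Prop :=
  forall a b, (0 < g a b)%N ->
    ((0 < h a b) && (g a b <= h a b))%N || ((0 < h b a) && (g a b < h b a))%N.

Definition graph_relabel (A A' : Type) (g : wgraph A) (sigma : A' -> A) : wgraph A' :=
  fun x y => g (sigma x) (sigma y).

Definition graph_comp (A B : finType) (g : wgraph A) (a : A) (h : wgraph B)
  : wgraph (subst_idx A B a) :=
  fun z1 z2 => match z1, z2 with
               | inl x, inl y => g (val x) (val y)
               | inr b, inr b' => h b b'
               | inl x, inr _ => g (val x) a
               | inr _, inl y => g a (val y)
               end.

(* weight = (smallest i such that c_a, c_b are i-separated) + 1 (paper's
   1-based coordinate), directed a -> b iff c_a is i-below c_b *)
Definition phi (R : realType) (n : nat) (A : finType) (c : cube_fam R n A) : wgraph A :=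
  fun a b =>
    if a == b then 0%N else
    match [pick i : 'I_n | separated c a b i &&
                           [forall j : 'I_n, (j < i)%N ==> ~~ separated c a b j]] with
    | Some i => if below c a b i then i.+1 else 0%N
    | None => 0%N
    end.

Arguments cube_comp {R n A B} c a d.
Arguments graph_comp {A B} g a h.

(* Main.v *)
Require Import Defs.
From HB Require Import structures.
From mathcomp Require Import all_boot all_order all_algebra.
From mathcomp Require Import reals.
From mathcomp Require Import ring lra.
From Stdlib Require Import FunctionalExtensionality.
Set Implicit Arguments. Unset Strict Implicit. Unset Printing Implicit Defensive.
Import Order.TTheory GRing.Theory Num.Theory.

Section Aux.
Variables (R : realType) (n : nat).
Local Open Scope ring_scope.

Lemma phiE (A : finType) (c : cube_fam R n A) a b (i : 'I_n) : a != b ->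
  separated c a b i -> (forall j : 'I_n, (j < i)%N -> ~~ separated c a b j) ->
  phi c a b = if below c a b i then i.+1 else 0%N.
Proof.
move=> ab si mi; rewrite /phi (negbTE ab).
case: pickP => [i' /andP[si' /forallP mi']|H]; last first.
  have := H i; rewrite si /=; move/negbT/negP; case; apply/forallP => j.
  by apply/implyP => ji; apply: mi.
suff -> : i' = i by [].
apply/val_inj/eqP; rewrite eqn_leq; apply/andP; split; rewrite leqNgt; apply/negP.
- by move=> h; have := implyP (mi' i) h; rewrite si.
- by move=> h; have := mi _ h; rewrite si'.
Qed.

Lemma phi_pos (A : finType) (c : cube_fam R n A) a b : (0 < phi c a b)%N ->
  exists i : 'I_n, [/\ a != b, separated c a b i,
     (forall j : 'I_n, (j < i)%N -> ~~ separated c a b j),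
     below c a b i & phi c a b = i.+1].
Proof.
rewrite /phi; case: eqP => // /eqP ab.
case: pickP => // i /andP[si /forallP mi]; case: ifP => // bi _.
exists i; split => // j ji; exact: implyP (mi j) ji.
Qed.

Lemma min_sep (A : finType) (c : cube_fam R n A) a b (k : 'I_n) :
  separated c a b k -> exists i : 'I_n, separated c a b i /\
     (forall j : 'I_n, (j < i)%N -> ~~ separated c a b j).
Proof.
move=> sk.
case: (arg_minnP (fun i : 'I_n => nat_of_ord i) sk) => i si mi.
exists i; split => // j ji; apply/negP => sj; have := mi j sj.
by rewrite leqNgt ji.
Qed.

Lemma sepC (A : Type) (c : cube_fam R n A) a b i :
  separated c a b i = separated c b a i.
Proof. by rewrite /separated orbC. Qed.

Lemma below_excl (A : Type) (c : cube_fam R n A) a b i :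
  0 < cu c a i -> 0 < cu c b i -> below c a b i -> below c b a i -> False.
Proof. rewrite /below /cw => h1 h2 h3 h4; lra. Qed.


Lemma sep_exists (A : finType) (c : cube_fam R n A) a b : is_cubes c -> a != b ->
  exists i, separated c a b i.
Proof.
case=> hu _ hdis ab.
case: (boolP [exists i, separated c a b i]) => [/existsP//|/existsPn hns].
exfalso.
pose L i := if cv c a i <= cv c b i then cv c b i else cv c a i.
pose U i := if cw c a i <= cw c b i then cw c a i else cw c b i.
pose p i := (L i + U i) / 2.
have key i : [/\ cv c a i < p i, p i < cw c a i, cv c b i < p i & p i < cw c b i].
  have := hns i; rewrite /separated /below negb_or -!ltNge => /andP[h1 h2].
  have := hu a i; have := hu b i; rewrite /p /L /U; rewrite /cw in h1 h2 *.
  case: (leP (cv c a i) (cv c b i)) => h3; case: (leP (cu c a i + cv c a i) (cu c b i + cv c b i)) => h4 h5 h6; split; lra.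
pose x i := (p i - cv c a i) / cu c a i.
pose y i := (p i - cv c b i) / cu c b i.
have ux : in_unit_cube x.
  move=> i; have [k1 k2 _ _] := key i; have hp := hu a i; rewrite /x /cw in k2 *.
  rewrite ltr_pdivlMr // ltr_pdivrMr //; split; lra.
have uy : in_unit_cube y.
  move=> i; have [_ _ k1 k2] := key i; have hp := hu b i; rewrite /y /cw in k2 *.
  rewrite ltr_pdivlMr // ltr_pdivrMr //; split; lra.
apply: (hdis a b (elimN eqP ab) x y ux uy).
apply: functional_extensionality => i; rewrite /cemb /x /y.
have ha := hu a i; have hb := hu b i.
rewrite !mulrA !(mulrC (cu c _ i)) -!mulrA !divff ?mulr1; first lra.
- by rewrite gt_eqF.
- by rewrite gt_eqF.
Qed.

Lemma cv_ge0 (A : finType) (d : cube_fam R n A) b i : is_cubes d -> 0 <= cv d b i.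
Proof.
case=> hu hin _; rewrite leNgt; apply/negP => hv.
have hp := hu b i.
pose t := - cv d b i / (cu d b i - cv d b i).
have ht : 0 < t < 1.
  rewrite /t ltr_pdivlMr ?ltr_pdivrMr; lra.
have hx : in_unit_cube (fun _ : 'I_n => t) by move=> j; case/andP: ht => ? ?; split.
have [h1 _] := hin b _ hx i; rewrite /cemb in h1.
have : cu d b i * t + cv d b i = - (cv d b i)^+2 / (cu d b i - cv d b i).
  rewrite /t; field; lra.
move=> e; rewrite e in h1; move: h1; rewrite ltr_pdivlMr; nra.
Qed.

Lemma cw_le1 (A : finType) (d : cube_fam R n A) b i : is_cubes d -> cw d b i <= 1.
Proof.
case=> hu hin _; rewrite leNgt /cw; apply/negP => hv.
have hp := hu b i.
pose s := cu d b i + cv d b i - 1.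
pose t := cu d b i / (cu d b i + s).
have hs : 0 < s by rewrite /s; lra.
have ht : 0 < t < 1.
  rewrite /t ltr_pdivlMr ?ltr_pdivrMr; lra.
have hx : in_unit_cube (fun _ : 'I_n => t) by move=> j; case/andP: ht => ? ?; split.
have [_ h1] := hin b _ hx i; rewrite /cemb in h1.
have : cu d b i * t + cv d b i = 1 + s^+2 / (cu d b i + s).
  rewrite /t /s; field; lra.
move=> e; rewrite e in h1; move: h1; rewrite -ltrBrDl subrr ltr_pdivrMr; nra.
Qed.

Lemma lax_pair (A1 A2 : finType) (c1 : cube_fam R n A1) (c2 : cube_fam R n A2)
  p q p' q' :
  p' != q' -> (exists k, separated c2 p' q' k) ->
  (forall k, below c2 p' q' k -> below c1 p q k) ->
  (forall k, below c2 q' p' k -> below c1 q p k) ->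
  (forall k, below c1 p q k -> below c1 q p k -> False) ->
  (0 < phi c1 p q)%N ->
  ((0 < phi c2 p' q') && (phi c1 p q <= phi c2 p' q'))%N ||
  ((0 < phi c2 q' p') && (phi c1 p q < phi c2 q' p'))%N.
Proof.
move=> pq [k sk] H1 H2 Hno /phi_pos [i [_ si mi bi ->]].
have [j [sj mj]] := min_sep sk.
have sjq : separated c1 p q j.
  by case/orP: sj => h; apply/orP; [left; apply: H1 | right; apply: H2].
have ij : (i <= j)%N by rewrite leqNgt; apply/negP => /mi; rewrite sjq.
rewrite (phiE pq sj mj).
have qp : q' != p' by rewrite eq_sym.
have sj' : separated c2 q' p' j by rewrite sepC.
have mj' : forall l : 'I_n, (l < j)%N -> ~~ separated c2 q' p' l.
  by move=> l /mj; rewrite sepC.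
rewrite (phiE qp sj' mj').
case: ifP => b1; first by rewrite /= ltnS ij.
have b2 : below c2 q' p' j by move: sj; rewrite /separated b1.
rewrite b2 /= ltnS.
rewrite leq_eqVlt in ij; case/orP: ij => [/eqP ij|->]; last by idtac.
have e : i = j by apply: val_inj.
by exfalso; apply: (Hno i bi); rewrite e; apply: H2.
Qed.
End Aux.

Local Open Scope ring_scope.

Theorem mainTheorem5 (R : realType) (n : nat) (hn : (1 <= n)%N) :
  (forall (A : finType) (c : cube_fam R n A), is_cubes c -> is_Gext n (phi c))
  /\
  (forall (A B : finType) (a : A) (c : cube_fam R n A) (d : cube_fam R n B),
      is_cubes c -> is_cubes d ->
      graph_le (phi (cube_comp c a d)) (graph_comp (phi c) a (phi d)))
  /\
  (forall (A A' : finType) (sigma : A' -> A) (c : cube_fam R n A),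
      bijective sigma -> is_cubes c ->
      phi (cube_relabel c sigma) = graph_relabel (phi c) sigma).
Proof.
split; [|split].
- move=> A c hc; have hu : forall a i, 0 < cu c a i by case: hc.
  split.
  + split => [a|a b ab]; first by rewrite /phi eqxx.
    have [k sk] := sep_exists hc ab; have [j [sj mj]] := min_sep sk.
    have ba : b != a by rewrite eq_sym.
    have sj' : separated c b a j by rewrite sepC.
    have mj' : forall l : 'I_n, (l < j)%N -> ~~ separated c b a l.
      by move=> l /mj; rewrite sepC.
    rewrite (phiE ab sj mj) (phiE ba sj' mj').
    case: ifP => b1.
    * have -> : below c b a j = false.
        by apply/negP => b2; apply: (below_excl (hu a j) (hu b j) b1 b2).
      by rewrite /= ltn_ord.
    * have -> : below c b a j by move: sj; rewrite /separated b1.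
      by rewrite /= ltn_ord.
  + move=> [w [s /and4P [w0 sn _ cyc]]].
    case: s sn cyc => // x0 p _; case: w w0 => // k _ cyc.
    case: (ltnP k n) => kn.
    * pose i0 := Ordinal kn.
      have : cycle (fun x y => cv c x i0 < cv c y i0) (x0 :: p).
        apply: sub_cycle cyc => x y /eqP e.
        have : (0 < phi c x y)%N by rewrite e.
        case/phi_pos => i [_ _ _ bi e2]; rewrite e in e2.
        have ii : i = i0 by apply: val_inj; case: e2.
        move: bi; rewrite ii /below /cw; have := hu x i0; lra.
      rewrite /= => /(order_path_min (fun y x z (h1 : _ < _) h2 => lt_trans h1 h2)).
      by move/allP => /(_ x0); rewrite mem_rcons mem_head ltxx => /(_ isT).
    * move: cyc; rewrite /= rcons_path => /andP[_ /eqP e].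
      have : (0 < phi c (last x0 p) x0)%N by rewrite e.
      case/phi_pos => i [_ _ _ _ e2]; rewrite e in e2; case: e2 => e2.
      by move: (ltn_ord i); rewrite -e2 ltnNge kn.
- move=> A B a c d hc hd z1 z2 hpos.
  have hu : forall a i, 0 < cu c a i by case: hc.
  have hud : forall a i, 0 < cu d a i by case: hd.
  have [i0 [hne _ _ _ _]] := phi_pos hpos.
  have huc : forall z k, 0 < cu (cube_comp c a d) z k.
    by case => [x|b] k /=; [exact: hu | exact: mulr_gt0].
  have Hno := fun k => below_excl (huc z1 k) (huc z2 k).
  case: z1 z2 hne hpos Hno => [x|b] [y|b'] hne hpos Hno /=;
    apply: (lax_pair _ _ _ _ Hno hpos).
  + apply: contra hne => /eqP e; apply/eqP; congr inl; exact: val_inj.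
  + exact: sep_exists hc (_ : val x != val y).
  + by [].
  + by [].
  + exact: (valP x).
  + exact: sep_exists hc (valP x).
  + move=> k; rewrite /below /cw /= => h.
    have := mulr_ge0 (ltW (hu a k)) (cv_ge0 b' k hd); lra.
  + move=> k; rewrite /below /cw /= => h.
    have h2 := ler_wpM2l (ltW (hu a k)) (cw_le1 b' k hd).
    rewrite /cw mulrDr mulr1 in h2; lra.
  + by rewrite eq_sym (valP y).
  + by apply: sep_exists hc _; rewrite eq_sym (valP y).
  + move=> k; rewrite /below /cw /= => h.
    have h2 := ler_wpM2l (ltW (hu a k)) (cw_le1 b k hd).
    rewrite /cw mulrDr mulr1 in h2; lra.
  + move=> k; rewrite /below /cw /= => h.
    have := mulr_ge0 (ltW (hu a k)) (cv_ge0 b k hd); lra.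
  + by apply: contra hne => /eqP ->.
  + by apply: sep_exists hd _; apply: contra hne => /eqP ->.
  + move=> k; rewrite /below /cw /= => h.
    have h2 := ler_wpM2l (ltW (hu a k)) h; rewrite mulrDr in h2; lra.
  + move=> k; rewrite /below /cw /= => h.
    have h2 := ler_wpM2l (ltW (hu a k)) h; rewrite mulrDr in h2; lra.
- move=> A A' sigma c [tau s1 s2] _.
  apply: functional_extensionality => x; apply: functional_extensionality => y.
  by rewrite /phi /graph_relabel (inj_eq (can_inj s1)).
Qed.
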